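(* Let $(E,\|\cdot\|_E)$ be a quasi-normed symmetric sequence space with $E\subseteq c_0$ (and whose dual $E^*$ separates the points of $E$). Then $(E,\|\cdot\|_{\widehat{E}})$ is a normed symmetric sequence space; that is, $\|\cdot\|_{\widehat E}$ is a norm on $E$ and whenever $f\in L_0(\mathbb{N})$, $g\in E$ and $\mu(f)\le\mu(g)$, then $f\in E$ and $\|f\|_{\widehat{E}}\le\|g\|_{\widehat{E}}$.
   Context: A quasi-norm on a complex vector space $X$ is a map $\|\cdot\|_X:X\to\mathbb R$ with $\|x\|_X>0$ for $x\ne0$, $\|\alpha x\|_X=|\alpha|\|x\|_X$, and $\|x+y\|_X\le C(\|x\|_X+\|y\|_X)$ for some constant $C$. The envelope seminorm is $\|x\|_{\widehat{X}}=\inf\{\sum_{i=1}^n\|x_i\|_X: x=\sum_{i=1}^n x_i,\ x_i\in X,\ n\in\mathbb N\}$ (equivalently the Minkowski functional of the convex hull of the unit ball of $X$); it is a norm when $X^*$ separates points, and the Banach envelope $\widehat X$ is the completion of $(X,\|\cdot\|_{\widehat X})$. $L_0(\mathbb N)$ is the space of complex sequences with counting measure $m$; the decreasing rearrangement is $\mu(t,f)=\inf\{s\ge 0: m\{k:|f(k)|>s\}\le t\}$, identified with the sequence $(\mu(n-1,f))_{n\ge1}$. A quasi-normed symmetric sequence space is a quasi-normed space $E\subseteq L_0(\mathbb N)$ such that whenever $f\in L_0(\mathbb N)$, $g\in E$ and $\mu(f)\le\mu(g)$, then $f\in E$ and $\|f\|_E\le\|g\|_E$. *)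

(* Defs.v *)
From Stdlib Require Import Reals List ClassicalEpsilon.
Open Scope R_scope.

Definition C : Type := (R * R)%type.
Definition C0 : C := (0, 0).
Definition Cadd (z w : C) : C := (fst z + fst w, snd z + snd w).
Definition Cmul (z w : C) : C :=
  (fst z * fst w - snd z * snd w, fst z * snd w + snd z * fst w).
Definition Cmod (z : C) : R := sqrt (fst z ^ 2 + snd z ^ 2).

(* ---------- L_0(N): complex sequences ---------- *)
Definition seqC : Type := nat -> C.
Definition szero : seqC := fun _ => C0.
Definition sadd (x y : seqC) : seqC := fun k => Cadd (x k) (y k).
Definition sscal (a : C) (x : seqC) : seqC := fun k => Cmul a (x k).

Definition is_lower_bound (S : R -> Prop) (m : R) : Prop := forall s, S s -> m <= s.
Definition is_glb (S : R -> Prop) (m : R) : Prop :=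
  is_lower_bound S m /\ (forall b, is_lower_bound S b -> b <= m).
(* the infimum of S (meaningful when S is nonempty and bounded below) *)
Definition glb_of (S : R -> Prop) : R := epsilon (inhabits 0) (is_glb S).

(* extended reals [0, +oo] for values of the decreasing rearrangement *)
Inductive ereal : Type := Fin (r : R) | PInf.
Definition ele (a b : ereal) : Prop :=
  match a, b with
  | _, PInf => True
  | PInf, Fin _ => False
  | Fin x, Fin y => x <= y
  end.

(* m{k : |f k| > s} <= t  (t a natural number): the set has at most t elements *)
Definition dist_le (f : seqC) (s : R) (t : nat) : Prop :=
  exists l : list nat, (length l <= t)%nat /\
    forall k, Cmod (f k) > s -> In k l.
Definition mu_set (t : nat) (f : seqC) (s : R) : Prop := 0 <= s /\ dist_le f s t.
(* v is inf{s >= 0 : m{|f| > s} <= t}, with inf of the empty set = +oo *)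
Definition is_mu (t : nat) (f : seqC) (v : ereal) : Prop :=
  match v with
  | Fin r => is_glb (mu_set t f) r /\ exists s, mu_set t f s
  | PInf => forall s, ~ mu_set t f s
  end.
Definition mu (t : nat) (f : seqC) : ereal := epsilon (inhabits PInf) (is_mu t f).
(* mu(f) <= mu(g) as sequences (mu(n-1,f))_{n>=1}, i.e. at every t in N *)
Definition mu_le (f g : seqC) : Prop := forall t : nat, ele (mu t f) (mu t g).

Definition subspace (E : seqC -> Prop) : Prop :=
  E szero /\ (forall x y, E x -> E y -> E (sadd x y)) /\
  (forall a x, E x -> E (sscal a x)).

Definition is_quasinorm (E : seqC -> Prop) (nE : seqC -> R) : Prop :=
  (forall x, E x -> x <> szero -> 0 < nE x) /\
  (forall a x, E x -> nE (sscal a x) = Cmod a * nE x) /\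
  (exists K, forall x y, E x -> E y -> nE (sadd x y) <= K * (nE x + nE y)).

Definition is_norm (E : seqC -> Prop) (nE : seqC -> R) : Prop :=
  (forall x, E x -> x <> szero -> 0 < nE x) /\
  (forall a x, E x -> nE (sscal a x) = Cmod a * nE x) /\
  (forall x y, E x -> E y -> nE (sadd x y) <= nE x + nE y).

Definition symmetric (E : seqC -> Prop) (N : seqC -> R) : Prop :=
  forall f g, E g -> mu_le f g -> E f /\ N f <= N g.

Definition quasi_normed_symmetric (E : seqC -> Prop) (nE : seqC -> R) : Prop :=
  subspace E /\ is_quasinorm E nE /\ symmetric E nE.

Definition in_c0 (E : seqC -> Prop) : Prop :=
  forall f, E f -> Un_cv (fun k => Cmod (f k)) 0.

(* E^* separates points: continuous (= bounded) C-linear functionals *)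
Definition cont_lin_functional (E : seqC -> Prop) (nE : seqC -> R) (phi : seqC -> C) : Prop :=
  (forall x y, E x -> E y -> phi (sadd x y) = Cadd (phi x) (phi y)) /\
  (forall a x, E x -> phi (sscal a x) = Cmul a (phi x)) /\
  (exists K, forall x, E x -> Cmod (phi x) <= K * nE x).
Definition dual_separates (E : seqC -> Prop) (nE : seqC -> R) : Prop :=
  forall x, E x -> x <> szero ->
    exists phi, cont_lin_functional E nE phi /\ phi x <> C0.

Definition ssum (l : list seqC) : seqC := fold_right sadd szero l.
Definition nsum (nE : seqC -> R) (l : list seqC) : R :=
  fold_right (fun y acc => nE y + acc) 0 l.
Definition env_set (E : seqC -> Prop) (nE : seqC -> R) (x : seqC) (t : R) : Prop :=
  exists l : list seqC, l <> nil /\ Forall E l /\ x = ssum l /\ t = nsum nE l.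
Definition env_norm (E : seqC -> Prop) (nE : seqC -> R) (x : seqC) : R :=
  glb_of (env_set E nE x).

(* Main.v *)
Require Import Defs.
From Stdlib Require Import Reals List ClassicalEpsilon.
From Stdlib Require Import FunctionalExtensionality Classical Lia Lra Psatz.
Open Scope R_scope.

Lemma Cmod_ge0 z : 0 <= Cmod z.
Proof. unfold Cmod; apply sqrt_pos. Qed.

Lemma Cmod_C0 : Cmod C0 = 0.
Proof. unfold Cmod, C0; cbn [fst snd]. replace (0^2+0^2) with 0 by ring. apply sqrt_0. Qed.

Lemma Cmod_eq0 z : Cmod z = 0 -> z = C0.
Proof.
  destruct z as [p q]; unfold Cmod, C0; simpl; intro H.
  apply sqrt_eq_0 in H; [|nra].
  assert (p = 0) by nra. assert (q = 0) by nra. subst; reflexivity.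
Qed.

Lemma Cmod_mul z w : Cmod (Cmul z w) = Cmod z * Cmod w.
Proof.
  destruct z as [a b], w as [c d]; unfold Cmod, Cmul; simpl.
  rewrite <- sqrt_mult by nra. f_equal. ring.
Qed.

Lemma Cmod_fst z : Rabs (fst z) <= Cmod z.
Proof.
  destruct z as [a b]; unfold Cmod; simpl.
  rewrite <- sqrt_Rsqr_abs. apply sqrt_le_1_alt. unfold Rsqr. nra.
Qed.

Lemma Cmod_snd z : Rabs (snd z) <= Cmod z.
Proof.
  destruct z as [a b]; unfold Cmod; simpl.
  rewrite <- sqrt_Rsqr_abs. apply sqrt_le_1_alt. unfold Rsqr. nra.
Qed.

Lemma Cmul_C0_l z : Cmul C0 z = C0.
Proof. destruct z; unfold Cmul, C0; simpl; f_equal; ring. Qed.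

Lemma Cmul_Cadd_r a b c : Cmul a (Cadd b c) = Cadd (Cmul a b) (Cmul a c).
Proof. destruct a, b, c; unfold Cmul, Cadd; simpl; f_equal; ring. Qed.

Lemma Cmul_C0_r a : Cmul a C0 = C0.
Proof. destruct a; unfold Cmul, C0; simpl; f_equal; ring. Qed.

Lemma Cadd_C0_r a : Cadd a C0 = a.
Proof. destruct a; unfold Cadd, C0; simpl; f_equal; ring. Qed.

Lemma Cadd_C0_l a : Cadd C0 a = a.
Proof. destruct a; unfold Cadd, C0; simpl; f_equal; ring. Qed.

Lemma Cadd_assoc a b c : Cadd a (Cadd b c) = Cadd (Cadd a b) c.
Proof. destruct a, b, c; unfold Cadd; simpl; f_equal; ring. Qed.

Lemma Cmul_assoc a b c : Cmul a (Cmul b c) = Cmul (Cmul a b) c.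
Proof. destruct a, b, c; unfold Cmul; simpl; f_equal; ring. Qed.

Definition Cinv (w : Defs.C) : Defs.C :=
  (fst w / (fst w ^ 2 + snd w ^ 2), - snd w / (fst w ^ 2 + snd w ^ 2)).
Definition Cdiv (z w : Defs.C) : Defs.C := Cmul z (Cinv w).

Lemma Cinv_l w : w <> C0 -> Cmul (Cinv w) w = (1, 0).
Proof.
  destruct w as [p q]; intro H; unfold Cinv, Cmul; simpl.
  assert (Hn : p ^ 2 + q ^ 2 <> 0).
  { intro Hz. apply H. assert (p = 0) by nra. assert (q = 0) by nra. subst; reflexivity. }
  f_equal; field; auto; lra.
Qed.

Lemma Cmul_one_r z : Cmul z (1, 0) = z.
Proof. destruct z; unfold Cmul; simpl; f_equal; ring. Qed.

Lemma Cdiv_mul z w : w <> C0 -> Cmul (Cdiv z w) w = z.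
Proof. intro H; unfold Cdiv. rewrite <- Cmul_assoc, Cinv_l by auto. apply Cmul_one_r. Qed.

Lemma Cmod_one : Cmod (1, 0) = 1.
Proof. unfold Cmod; cbn [fst snd]. replace (1^2+0^2) with 1 by ring. apply sqrt_1. Qed.

Lemma Cmod_pos z : z <> C0 -> 0 < Cmod z.
Proof.
  intro H. destruct (Cmod_ge0 z) as [h|h]; auto. exfalso; apply H, Cmod_eq0; auto.
Qed.

Lemma sscal_C0 x : sscal C0 x = szero.
Proof. apply functional_extensionality; intro k; apply Cmul_C0_l. Qed.

Lemma sscal_szero a : sscal a szero = szero.
Proof. apply functional_extensionality; intro k; apply Cmul_C0_r. Qed.

Lemma sadd_szero_r x : sadd x szero = x.
Proof. apply functional_extensionality; intro k; apply Cadd_C0_r. Qed.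

Lemma sadd_szero_l x : sadd szero x = x.
Proof. apply functional_extensionality; intro k; apply Cadd_C0_l. Qed.

Lemma sadd_assoc x y z : sadd x (sadd y z) = sadd (sadd x y) z.
Proof. apply functional_extensionality; intro k; apply Cadd_assoc. Qed.

Lemma sscal_sadd a x y : sscal a (sadd x y) = sadd (sscal a x) (sscal a y).
Proof. apply functional_extensionality; intro k; apply Cmul_Cadd_r. Qed.

Lemma sscal_sscal a b x : sscal a (sscal b x) = sscal (Cmul a b) x.
Proof. apply functional_extensionality; intro k; apply Cmul_assoc. Qed.

Lemma sscal_one x : sscal (1,0) x = x.
Proof. apply functional_extensionality; intro k. unfold sscal. destruct (x k); unfold Cmul; simpl; f_equal; ring. Qed.

Lemma ssum_app l1 l2 : ssum (l1 ++ l2) = sadd (ssum l1) (ssum l2).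
Proof.
  induction l1; simpl. rewrite sadd_szero_l; auto.
  rewrite IHl1, sadd_assoc; auto.
Qed.

Lemma nsum_app nE l1 l2 : nsum nE (l1 ++ l2) = nsum nE l1 + nsum nE l2.
Proof. induction l1; simpl. ring. rewrite IHl1; ring. Qed.

Lemma ssum_map_sscal a l : ssum (map (sscal a) l) = sscal a (ssum l).
Proof. induction l; simpl. rewrite sscal_szero; auto. rewrite IHl, sscal_sadd; auto. Qed.

Lemma glb_ex (S : R -> Prop) b : (exists s, S s) -> (forall s, S s -> b <= s) ->
  exists m, is_glb S m.
Proof.
  intros [s0 Hs0] Hb.
  destruct (completeness (fun y => S (- y))) as [m [Hub Hl]].
  - exists (- b). intros y Hy. specialize (Hb _ Hy). lra.
  - exists (- s0). rewrite Ropp_involutive; auto.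
  - exists (- m). split.
    + intros s Hs. assert (- s <= m). { apply Hub. rewrite Ropp_involutive; auto. } lra.
    + intros b' Hb'. assert (m <= - b'). { apply Hl. intros y Hy. specialize (Hb' _ Hy). lra. } lra.
Qed.

Lemma glb_of_spec (S : R -> Prop) b : (exists s, S s) -> (forall s, S s -> b <= s) ->
  is_glb S (glb_of S).
Proof. intros. unfold glb_of. apply epsilon_spec. eapply glb_ex; eauto. Qed.

Lemma glb_approx (S : R -> Prop) m u : is_glb S m -> m < u -> exists s, S s /\ s < u.
Proof.
  intros [Hl Hg] Hu. apply NNPP; intro H.
  assert (u <= m). { apply Hg. intros s Hs. apply Rnot_lt_le. intro. apply H; eauto. } lra.
Qed.

Lemma mu_spec t f : is_mu t f (mu t f).
Proof.
  unfold mu; apply epsilon_spec.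
  destruct (classic (exists s, mu_set t f s)) as [H|H].
  - destruct (glb_ex (mu_set t f) 0) as [m Hm]; auto.
    { intros s [Hs _]; auto. }
    exists (Fin m); simpl; auto.
  - exists PInf; simpl. intros s Hs; apply H; eauto.
Qed.

Lemma list_argmax (h : nat -> R) (D : list nat) : D <> nil ->
  exists j, In j D /\ forall d, In d D -> h d <= h j.
Proof.
  induction D as [|a D IH]; intro Hne; [congruence|].
  destruct D as [|b D'].
  - exists a; split; [left; auto|]. intros d [Hd|[]]; subst; lra.
  - destruct IH as [j [Hj Hmax]]; [discriminate|].
    destruct (Rle_dec (h a) (h j)).
    + exists j; split; [right; auto|]. intros d [Hd|Hd]; subst; auto.
    + exists a; split; [left; auto|]. intros d [Hd|Hd]; subst; [lra|].
      specialize (Hmax d Hd); lra.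
Qed.

Lemma build_list f s t : ~ dist_le f s t -> forall n, (n <= S t)%nat ->
  exists l, NoDup l /\ length l = n /\ forall k, In k l -> Cmod (f k) > s.
Proof.
  intros Hnd n; induction n as [|n IH]; intro Hn.
  - exists nil; repeat split; [constructor| intros k []].
  - destruct IH as [l [Hl1 [Hl2 Hl3]]]; [lia|].
    assert (exists k, Cmod (f k) > s /\ ~ In k l) as [k [Hk1 Hk2]].
    { apply NNPP; intro H. apply Hnd. exists l; split; [lia|].
      intros k Hk. apply NNPP; intro Hin. apply H; eauto. }
    exists (k :: l); repeat split; simpl; auto. constructor; auto.
    intros k' [->|H]; auto.
Qed.

Lemma mu_le_dist f g : mu_le f g -> forall s t, 0 <= s -> dist_le g s t -> dist_le f s t.
Proof.
  intros H s t Hs Hd.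
  assert (Hs' : forall s', s < s' -> dist_le f s' t).
  { intros s' Hss'. pose proof (H t) as Hle. pose proof (mu_spec t g) as Hg.
    pose proof (mu_spec t f) as Hf. revert Hle Hg Hf.
    destruct (mu t g) as [r|]; destruct (mu t f) as [r'|]; simpl; intros Hle Hg Hf.
    - destruct Hg as [[Hlb _] _]. assert (r <= s) by (apply Hlb; split; auto).
      destruct (glb_approx _ _ s' (proj1 Hf)) as [u [[Hu0 Hu] Hus]]; [lra|].
      destruct Hu as [l [Hl1 Hl2]]. exists l; split; auto. intros k Hk; apply Hl2; lra.
    - contradiction.
    - exfalso; apply (Hg s); split; auto.
    - exfalso; apply (Hg s); split; auto. }
  apply NNPP; intro Hnd.
  destruct (build_list f s t Hnd (S t) (le_n _)) as [l [Hl1 [Hl2 Hl3]]].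
  destruct (list_argmax (fun k => - Cmod (f k)) l) as [j [Hj Hjm]].
  { intro; subst; simpl in Hl2; discriminate. }
  pose proof (Hl3 j Hj) as Hjs.
  destruct (Hs' ((s + Cmod (f j)) / 2)) as [L [HL1 HL2]]; [lra|].
  assert (Hinc : incl l L).
  { intros k Hk. apply HL2. specialize (Hjm k Hk). simpl in Hjm. lra. }
  pose proof (NoDup_incl_length Hl1 Hinc). lia.
Qed.

Lemma dist_mu_le F G : (forall s t, 0 <= s -> dist_le G s t -> dist_le F s t) -> mu_le F G.
Proof.
  intros H t. pose proof (mu_spec t G) as HG. pose proof (mu_spec t F) as HF.
  revert HG HF. destruct (mu t G) as [r|]; destruct (mu t F) as [r'|]; simpl; intros HG HF; auto.
  - destruct HG as [[Hlb Hgr] _]. destruct HF as [[Hlb' _] _].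
    apply Hgr. intros s [Hs0 Hs]. apply Hlb'. split; auto.
  - destruct HG as [_ [s0 [Hs0 Hs]]]. apply (HF s0). split; auto.
Qed.

Definition c0s (x : seqC) : Prop := Un_cv (fun k => Cmod (x k)) 0.

Definition is_next (x : seqC) (L : list nat) (j : nat) : Prop :=
  ~ In j L /\ forall i, ~ In i L -> Cmod (x i) <= Cmod (x j).
Definition next (x : seqC) (L : list nat) : nat := epsilon (inhabits 0%nat) (is_next x L).
Fixpoint seqL (x : seqC) (n : nat) : list nat :=
  match n with O => nil | S m => next x (seqL x m) :: seqL x m end.
Definition tau (x : seqC) (n : nat) : nat := next x (seqL x n).

Lemma c0_below x (Hx : c0s x) e : 0 < e -> exists N, forall i, (i >= N)%nat -> Cmod (x i) < e.
Proof.
  intro He. destruct (Hx e He) as [N HN]. exists N. intros i Hi.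
  specialize (HN i Hi). unfold R_dist in HN. rewrite Rminus_0_r in HN.
  pose proof (Rle_abs (Cmod (x i))). lra.
Qed.

Lemma next_ex x (Hx : c0s x) L : exists j, is_next x L j.
Proof.
  destruct (classic (exists i, ~ In i L /\ 0 < Cmod (x i))) as [[i0 [Hi0 Hpos]] | Hno].
  - destruct (c0_below x Hx _ Hpos) as [N HN].
    set (D := filter (fun i => if in_dec Nat.eq_dec i L then false else true) (seq 0 (N + S i0))).
    assert (HD : forall i, In i D <-> (i < N + S i0)%nat /\ ~ In i L).
    { intro i. unfold D. rewrite filter_In, in_seq.
      destruct (in_dec Nat.eq_dec i L); split; intros [H1 H2]; try split; try lia; auto; try discriminate; tauto. }
    destruct (list_argmax (fun k => Cmod (x k)) D) as [j [Hj Hjm]].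
    { intro HDn. assert (In i0 D) by (apply HD; split; [lia|auto]). rewrite HDn in H; auto. }
    exists j. split; [apply HD; auto|].
    intros i Hi. destruct (Compare_dec.lt_dec i (N + S i0)).
    + apply Hjm, HD; auto.
    + assert (Cmod (x i) < Cmod (x i0)) by (apply HN; lia).
      assert (Cmod (x i0) <= Cmod (x j)) by (apply Hjm, HD; split; [lia|auto]). lra.
  - exists (S (list_max L)). split.
    + intro H. assert (S (list_max L) <= list_max L)%nat.
      { pose proof (proj1 (list_max_le L (list_max L)) (le_n _)) as HF.
        rewrite Forall_forall in HF. apply HF; auto. }
      lia.
    + intros i Hi. assert (Cmod (x i) <= 0).
      { apply Rnot_lt_le; intro; apply Hno; eauto. }
      pose proof (Cmod_ge0 (x (S (list_max L)))). lra.
Qed.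

Lemma next_spec x (Hx : c0s x) L : is_next x L (next x L).
Proof. unfold next; apply epsilon_spec, next_ex; auto. Qed.

Lemma seqL_In x n j : In j (seqL x n) <-> exists i, (i < n)%nat /\ tau x i = j.
Proof.
  induction n; simpl.
  - split; [intros []|intros [i [Hi _]]; lia].
  - rewrite IHn. split.
    + intros [H|[i [Hi H]]]; [exists n; split; [lia|auto]|exists i; split; [lia|auto]].
    + intros [i [Hi H]]. destruct (Nat.eq_dec i n); [subst; left; auto|right; exists i; split; [lia|auto]].
Qed.

Lemma seqL_len x n : length (seqL x n) = n.
Proof. induction n; simpl; auto. Qed.

Lemma seqL_nodup x (Hx : c0s x) n : NoDup (seqL x n).
Proof. induction n; simpl; constructor; auto. apply (next_spec x Hx). Qed.

Lemma tau_notin x (Hx : c0s x) n : ~ In (tau x n) (seqL x n).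
Proof. apply (next_spec x Hx). Qed.

Lemma tau_max x (Hx : c0s x) n i : ~ In i (seqL x n) -> Cmod (x i) <= Cmod (x (tau x n)).
Proof. apply (next_spec x Hx). Qed.

Lemma tau_inj x (Hx : c0s x) i j : tau x i = tau x j -> i = j.
Proof.
  intro H. destruct (Compare_dec.lt_eq_lt_dec i j) as [[h|h]|h]; auto.
  - exfalso. apply (tau_notin x Hx j). apply seqL_In. exists i; auto.
  - exfalso. apply (tau_notin x Hx i). apply seqL_In. exists j; auto.
Qed.

Lemma tau_mono x (Hx : c0s x) n m : (n <= m)%nat -> Cmod (x (tau x m)) <= Cmod (x (tau x n)).
Proof.
  intro H. apply tau_max; auto. rewrite seqL_In. intros [i [Hi He]].
  apply tau_inj in He; auto. lia.
Qed.

Lemma tau_surj x (Hx : c0s x) j : 0 < Cmod (x j) -> exists n, tau x n = j.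
Proof.
  intro Hj. apply NNPP; intro Hn.
  assert (Hb : forall n, Cmod (x j) <= Cmod (x (tau x n))).
  { intro n. apply tau_max; auto. rewrite seqL_In. intros [i [_ Hi]]. apply Hn; eauto. }
  destruct (c0_below x Hx _ Hj) as [N HN].
  assert (Hinc : incl (seqL x (S N)) (seq 0 N)).
  { intros e He. apply seqL_In in He. destruct He as [i [_ <-]]. apply in_seq.
    destruct (Compare_dec.lt_dec (tau x i) N); [lia|]. specialize (HN (tau x i) ltac:(lia)).
    specialize (Hb i). lra. }
  pose proof (NoDup_incl_length (seqL_nodup x Hx (S N)) Hinc).
  rewrite seqL_len, length_seq in H. lia.
Qed.

Lemma tau_le f g (Hf : c0s f) (Hg : c0s g) : mu_le f g ->
  forall n, Cmod (f (tau f n)) <= Cmod (g (tau g n)).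
Proof.
  intros Hmu n. apply Rnot_lt_le. intro Hlt.
  set (s := Cmod (g (tau g n))).
  assert (Hd : dist_le g s n).
  { exists (seqL g n). rewrite seqL_len. split; auto. intros k Hk.
    apply NNPP; intro Hin. pose proof (tau_max g Hg n k Hin). unfold s in Hk. lra. }
  destruct (mu_le_dist f g Hmu s n (Cmod_ge0 _) Hd) as [L [HL1 HL2]].
  assert (Hinc : incl (seqL f (S n)) L).
  { intros e He. apply seqL_In in He. destruct He as [i [Hi <-]]. apply HL2.
    pose proof (tau_mono f Hf i n ltac:(lia)). fold s in Hlt. lra. }
  pose proof (NoDup_incl_length (seqL_nodup f Hf (S n)) Hinc).
  rewrite seqL_len in H. lia.
Qed.

Lemma nE_szero (E : seqC -> Prop) nE (HE0 : E szero)
  (Hhom : forall a x, E x -> nE (sscal a x) = Cmod a * nE x) : nE szero = 0.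
Proof. pose proof (Hhom C0 szero HE0) as H. rewrite sscal_C0, Cmod_C0 in H. lra. Qed.

Lemma ssum_E (E : seqC -> Prop) (HE0 : E szero) (HEadd : forall x y, E x -> E y -> E (sadd x y))
  l : Forall E l -> E (ssum l).
Proof. induction 1; simpl; auto. Qed.

Lemma nsum_ge0 (E : seqC -> Prop) nE (Hge : forall x, E x -> 0 <= nE x) l :
  Forall E l -> 0 <= nsum nE l.
Proof. induction 1 as [|y l Hy Hl IH]; simpl; auto. right; reflexivity. specialize (Hge y Hy). lra. Qed.

Lemma env_glb (E : seqC -> Prop) nE (Hge : forall x, E x -> 0 <= nE x) x : E x ->
  is_glb (env_set E nE x) (env_norm E nE x).
Proof.
  intro Hx. apply (glb_of_spec _ 0).
  - exists (nE x + 0). exists (x :: nil). repeat split; auto.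
    + discriminate.
    + simpl. rewrite sadd_szero_r; auto.
  - intros s [l [_ [Hl [_ ->]]]]. eapply nsum_ge0; eauto.
Qed.

Lemma nsum_map_sscal (E : seqC -> Prop) nE
  (Hhom : forall a x, E x -> nE (sscal a x) = Cmod a * nE x) a l :
  Forall E l -> nsum nE (map (sscal a) l) = Cmod a * nsum nE l.
Proof. induction 1; simpl. ring. rewrite IHForall, Hhom by auto. ring. Qed.

Lemma env_scal_le (E : seqC -> Prop) nE (HE0 : E szero)
  (HEscal : forall a x, E x -> E (sscal a x))
  (Hge : forall x, E x -> 0 <= nE x)
  (Hhom : forall a x, E x -> nE (sscal a x) = Cmod a * nE x) a x : E x ->
  env_norm E nE (sscal a x) <= Cmod a * env_norm E nE x.
Proof.
  intro Hx.
  pose proof (env_glb E nE Hge _ (HEscal a x Hx)) as [Hlb1 _].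
  pose proof (env_glb E nE Hge _ Hx) as [Hlb2 Hgr2].
  assert (Hall : forall t, env_set E nE x t -> env_norm E nE (sscal a x) <= Cmod a * t).
  { intros t [l [Hl1 [Hl2 [Hl3 Hl4]]]]. apply Hlb1. exists (map (sscal a) l).
    repeat split.
    - destruct l; simpl; congruence.
    - apply Forall_map. eapply Forall_impl; [|exact Hl2]. intros; auto.
    - rewrite ssum_map_sscal, Hl3; auto.
    - rewrite (nsum_map_sscal E nE Hhom) by auto. subst; auto. }
  destruct (Cmod_ge0 a) as [Ha|Ha].
  - assert (env_norm E nE (sscal a x) / Cmod a <= env_norm E nE x).
    { apply Hgr2. intros t Ht. specialize (Hall t Ht).
      apply Rmult_le_reg_r with (Cmod a); auto. unfold Rdiv.
      rewrite Rmult_assoc, Rinv_l by lra. lra. }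
    apply Rmult_le_reg_r with (/ Cmod a). apply Rinv_0_lt_compat; auto.
    rewrite (Rmult_comm (Cmod a)), Rmult_assoc, Rinv_r by lra. lra.
  - symmetry in Ha. apply Cmod_eq0 in Ha. subst a. rewrite Cmod_C0, Rmult_0_l.
    apply Hlb1. exists (szero :: nil). repeat split.
    + discriminate.
    + constructor; auto.
    + simpl; rewrite sadd_szero_r, sscal_C0; auto.
    + simpl. rewrite (nE_szero E nE HE0 Hhom). ring.
Qed.

Lemma lin_bound (E : seqC -> Prop) nE (HE0 : E szero)
  (HEadd : forall x y, E x -> E y -> E (sadd x y))
  (phi : seqC -> Defs.C) (pr : Defs.C -> R) K
  (Hadd : forall x y, E x -> E y -> phi (sadd x y) = Cadd (phi x) (phi y))
  (Hsc : forall a x, E x -> phi (sscal a x) = Cmul a (phi x))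
  (HK : forall x, E x -> Cmod (phi x) <= K * nE x)
  (Hpradd : forall z w, pr (Cadd z w) = pr z + pr w)
  (Hpr0 : pr C0 = 0)
  (Hprb : forall z, Rabs (pr z) <= Cmod z) :
  forall l, Forall E l -> Rabs (pr (phi (ssum l))) <= K * nsum nE l.
Proof.
  induction 1; simpl.
  - pose proof (Hsc C0 szero HE0) as H. rewrite sscal_C0, Cmul_C0_l in H.
    rewrite H, Hpr0, Rabs_R0. lra.
  - rewrite Hadd by (auto; eapply ssum_E; eauto). rewrite Hpradd.
    pose proof (Rabs_triang (pr (phi x)) (pr (phi (ssum l)))).
    pose proof (Hprb (phi x)). pose proof (HK x H). nra.
Qed.

Lemma sym_env (E : seqC -> Prop) nE (Hsym : symmetric E nE) f g l :
  c0s f -> c0s g -> mu_le f g -> l <> nil -> Forall E l -> g = ssum l ->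
  exists l', l' <> nil /\ Forall E l' /\ f = ssum l' /\ nsum nE l' <= nsum nE l.
Proof.
  intros Hf Hg Hmu Hne Hl Hgl.
  set (nk := fun k => epsilon (inhabits 0%nat) (fun n => tau f n = k)).
  set (w := fun k => g (tau g (nk k))).
  set (c := fun k => if excluded_middle_informative (f k = C0) then C0 else Cdiv (f k) (w k)).
  set (F := fun (gi : seqC) (k : nat) => Cmul (c k) (gi (tau g (nk k)))).
  assert (Hnk : forall k, f k <> C0 -> tau f (nk k) = k).
  { intros k Hk. unfold nk. apply (epsilon_spec (inhabits 0%nat) (fun n => tau f n = k)).
    apply tau_surj; auto. apply Cmod_pos; auto. }
  assert (Hw : forall k, f k <> C0 -> Cmod (f k) <= Cmod (w k)).
  { intros k Hk. rewrite <- (Hnk k Hk) at 1. unfold w. apply tau_le; auto. }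
  assert (Hw0 : forall k, f k <> C0 -> w k <> C0).
  { intros k Hk Hwk. pose proof (Hw k Hk). pose proof (Cmod_pos _ Hk).
    rewrite Hwk, Cmod_C0 in H. lra. }
  assert (Hc1 : forall k, Cmod (c k) <= 1).
  { intro k. unfold c. destruct (excluded_middle_informative (f k = C0)).
    - rewrite Cmod_C0; lra.
    - pose proof (Cdiv_mul (f k) (w k) (Hw0 k n)) as H.
      apply (f_equal Cmod) in H. rewrite Cmod_mul in H.
      pose proof (Hw k n). pose proof (Cmod_pos _ (Hw0 k n)).
      pose proof (Cmod_ge0 (Cdiv (f k) (w k))). nra. }
  assert (Hsum : forall l0, ssum (map F l0) = fun k => Cmul (c k) (ssum l0 (tau g (nk k)))).
  { induction l0; simpl; apply functional_extensionality; intro k.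
    - unfold szero. rewrite Cmul_C0_r; auto.
    - rewrite IHl0. unfold sadd, F. rewrite Cmul_Cadd_r; auto. }
  assert (HFmu : forall gi, mu_le (F gi) gi).
  { intro gi. apply dist_mu_le. intros s t Hs [L [HL1 HL2]].
    exists (map (fun j => tau f (epsilon (inhabits 0%nat) (fun n => tau g n = j))) L).
    rewrite length_map. split; auto. intros k Hk.
    assert (Hfk : f k <> C0).
    { intro e. unfold F, c in Hk. destruct (excluded_middle_informative (f k = C0)); [|contradiction].
      rewrite Cmul_C0_l, Cmod_C0 in Hk. lra. }
    assert (Hin : In (tau g (nk k)) L).
    { apply HL2. unfold F in Hk. rewrite Cmod_mul in Hk.
      pose proof (Hc1 k). pose proof (Cmod_ge0 (c k)). pose proof (Cmod_ge0 (gi (tau g (nk k)))). nra. }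
    apply in_map_iff. exists (tau g (nk k)). split; auto.
    assert (Hm : tau g (epsilon (inhabits 0%nat) (fun n => tau g n = tau g (nk k))) = tau g (nk k)).
    { apply (epsilon_spec (inhabits 0%nat) (fun n => tau g n = tau g (nk k))). eauto. }
    apply tau_inj in Hm; auto. rewrite Hm. auto. }
  exists (map F l). repeat split.
  - destruct l; simpl; congruence.
  - apply Forall_forall. intros y Hy. apply in_map_iff in Hy. destruct Hy as [gi [<- Hgi]].
    rewrite Forall_forall in Hl. apply (Hsym (F gi) gi (Hl gi Hgi) (HFmu gi)).
  - rewrite Hsum. apply functional_extensionality; intro k. rewrite <- Hgl.
    fold (w k). unfold c. destruct (excluded_middle_informative (f k = C0)).
    + rewrite e, Cmul_C0_l; auto.
    + rewrite Cdiv_mul; auto.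
  - clear Hne Hgl. induction Hl; simpl. lra.
    pose proof (proj2 (Hsym (F x) x H (HFmu x))). lra.
Qed.

Theorem mainTheorem2 (E : seqC -> Prop) (nE : seqC -> R) :
  quasi_normed_symmetric E nE ->
  in_c0 E ->
  dual_separates E nE ->
  is_norm E (env_norm E nE) /\ symmetric E (env_norm E nE).
Proof.
  intros [[HE0 [HEadd HEscal]] [[Hpos [Hhom _]] Hsym]] Hc0 Hdual.
  assert (Hge : forall x, E x -> 0 <= nE x).
  { intros x Hx. destruct (classic (x = szero)) as [->|Hn].
    - rewrite (nE_szero E nE HE0 Hhom); lra.
    - apply Rlt_le, Hpos; auto. }
  split; [split; [|split]|].
  -
    intros x Hx Hne. destruct (Hdual x Hx Hne) as [phi [[Hadd [Hsc [K HK]]] Hphi]].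
    assert (Hex : exists pr : Defs.C -> R, (forall z w, pr (Cadd z w) = pr z + pr w) /\
              pr C0 = 0 /\ (forall z, Rabs (pr z) <= Cmod z) /\ pr (phi x) <> 0).
    { destruct (phi x) as [p q] eqn:Ep.
      destruct (Req_dec p 0) as [Hp|Hp].
      - exists snd. repeat split; auto using Cmod_snd. simpl. intro Hq. apply Hphi. subst; reflexivity.
      - exists fst. repeat split; auto using Cmod_fst. }
    destruct Hex as [pr [Hpradd [Hpr0 [Hprb Hprx]]]].
    pose proof (lin_bound E nE HE0 HEadd phi pr K Hadd Hsc HK Hpradd Hpr0 Hprb) as Hlb.
    set (v := Rabs (pr (phi x))).
    assert (Hv : 0 < v) by (apply Rabs_pos_lt; auto).
    assert (HKp : 0 < K).
    { pose proof (Hprb (phi x)). pose proof (HK x Hx). pose proof (Hpos x Hx Hne).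
      fold v in H. destruct (Rle_or_lt K 0); [|auto]. nra. }
    destruct (env_glb E nE Hge x Hx) as [_ Hgr].
    apply Rlt_le_trans with (v / K); [apply Rdiv_lt_0_compat; auto|].
    apply Hgr. intros t [l [_ [Hl [Hl3 ->]]]].
    specialize (Hlb l Hl). rewrite <- Hl3 in Hlb. fold v in Hlb.
    apply Rmult_le_reg_r with K; auto. unfold Rdiv. rewrite Rmult_assoc, Rinv_l by lra. lra.
  -
    intros a x Hx. destruct (classic (a = C0)) as [->|Ha].
    + pose proof (env_scal_le E nE HE0 HEscal Hge Hhom C0 x Hx).
      rewrite Cmod_C0 in *. rewrite Rmult_0_l in *.
      rewrite sscal_C0 in *. destruct (env_glb E nE Hge szero HE0) as [_ Hgr].
      apply Rle_antisym; auto. apply Hgr. intros t [l [_ [Hl [_ ->]]]].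
      eapply nsum_ge0; eauto.
    + apply Rle_antisym.
      * apply env_scal_le; auto.
      * pose proof (env_scal_le E nE HE0 HEscal Hge Hhom (Cinv a) (sscal a x) (HEscal a x Hx)) as H.
        rewrite sscal_sscal, Cinv_l, sscal_one in H by auto.
        assert (H1 : Cmod (Cinv a) * Cmod a = 1).
        { rewrite <- Cmod_mul, Cinv_l by auto. apply Cmod_one. }
        pose proof (Cmod_ge0 a).
        apply Rmult_le_compat_l with (r := Cmod a) in H; auto.
        assert (H2 : Cmod a * (Cmod (Cinv a) * env_norm E nE (sscal a x)) = env_norm E nE (sscal a x)).
        { rewrite <- Rmult_assoc, (Rmult_comm (Cmod a) (Cmod (Cinv a))), H1; ring. }
        lra.
  -
    intros x y Hx Hy.
    destruct (env_glb E nE Hge _ (HEadd x y Hx Hy)) as [Hlb _].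
    destruct (env_glb E nE Hge _ Hx) as [_ Hgx].
    destruct (env_glb E nE Hge _ Hy) as [_ Hgy].
    assert (env_norm E nE (sadd x y) - env_norm E nE x <= env_norm E nE y); [|lra].
    apply Hgy. intros t2 [l2 [Hn2 [Hl2 [Hs2 ->]]]].
    assert (env_norm E nE (sadd x y) - nsum nE l2 <= env_norm E nE x); [|lra].
    apply Hgx. intros t1 [l1 [Hn1 [Hl1 [Hs1 ->]]]].
    assert (env_norm E nE (sadd x y) <= nsum nE l1 + nsum nE l2); [|lra].
    rewrite <- nsum_app. apply Hlb. exists (l1 ++ l2). repeat split; auto.
    + destruct l1; simpl; congruence.
    + apply Forall_app; auto.
    + rewrite ssum_app; subst; auto.
  -
    intros f g Hg Hmu. destruct (Hsym f g Hg Hmu) as [Hf _]. split; auto.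
    destruct (env_glb E nE Hge _ Hf) as [Hlbf _].
    destruct (env_glb E nE Hge _ Hg) as [_ Hgrg].
    apply Hgrg. intros t [l [Hn [Hl [Hs ->]]]].
    destruct (sym_env E nE Hsym f g l (Hc0 f Hf) (Hc0 g Hg) Hmu Hn Hl Hs) as [l' [Hn' [Hl' [Hs' Hle]]]].
    apply Rle_trans with (nsum nE l'); auto. apply Hlbf. exists l'. repeat split; auto.
Qed.
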